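(* Let $G=(V,E)$ be a finite undirected graph and $k\in\mathbb{N}$. For $v\in V$ let $N[v]=\{v\}\cup\{v'\in V:\{v,v'\}\in E\}$, let $L_v=(V^*vv)^\omega\cup(V^*(V\setminus N[v]))^\omega\subseteq V^\omega$, and $L_G=\bigcap_{v\in V}L_v$. If $G$ is $k$-colourable, then there exists a complete deterministic generalised Büchi automaton over the input alphabet $V$ with $k$ states recognising $L_G$.
   Context: A finite undirected graph is $G=(V,E)$ with $V$ finite and $E$ a set of 2-element subsets of $V$. A $k$-colouring is a map $c:V\to\{1,\dots,k\}$ with $c(v)\ne c(v')$ whenever $\{v,v'\}\in E$; $G$ is $k$-colourable if one exists. For a set $X$, $(X^*Y)^\omega$ denotes infinite concatenations of words of $X^*Y$. An automaton is a tuple $(Q,\Sigma,q_{\mathrm{init}},\Delta,\Gamma,\mathrm{col},W)$ with finite state set, finite input alphabet $\Sigma$, initial state, transitions $\Delta\subseteq Q\times\Sigma\times Q$, output alphabet $\Gamma$, labelling $\mathrm{col}:\Delta\to\Gamma$, acceptance condition $W\subseteq\Gamma^\omega$. A run on $w=a_1a_2\cdots$ is a sequence $(q_0,a_1,q_1)(q_1,a_2,q_2)\cdots$ of transitions with $q_0=q_{\mathrm{init}}$, accepting if its label sequence is in $W$; the recognised language is the set of words with an accepting run. A generalised Büchi automaton with finite output colour set $C$ has $\Gamma=2^C$ and $W=\{x : \text{every } c\in C \text{ occurs in infinitely many letters of } x\}$. Deterministic (resp. complete): for every $(p,a)\in Q\times\Sigma$ there is at most (resp. at least) one $q$ with $(p,a,q)\in\Delta$.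 *)

(* Defs.v *)
From mathcomp Require Import all_boot.
Set Implicit Arguments. Unset Strict Implicit. Unset Printing Implicit Defensive.

(* A finite undirected (simple) graph: vertex finType V, symmetric irreflexive
   adjacency relation e ({v,v'} \in E  <->  e v v'). *)
Definition simple_graph (V : finType) (e : rel V) : Prop :=
  symmetric e /\ irreflexive e.

(* k-colouring: colours {1..k} represented by 'I_k. *)
Definition colourable (V : finType) (e : rel V) (k : nat) : Prop :=
  exists c : V -> 'I_k, forall v v', e v v' -> c v <> c v'.

Definition oword (V : Type) := nat -> V.

(* the finite factor w_a ... w_{b-1} *)
Definition segment (V : Type) (w : oword V) (a b : nat) : seq V :=
  [seq w i | i <- iota a (b - a)].

(* X^* Y, with X a set of letters and Y a set of finite words *)
Definition starcat (V : Type) (X : V -> Prop) (Y : seq V -> Prop) (u : seq V) :=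
  exists xs y, (forall i, i < size xs -> forall x0, X (nth x0 xs i)) /\ Y y /\ u = xs ++ y.

(* Z^omega for a set Z of finite words: infinite concatenations of words of Z *)
Definition omega_iter (V : Type) (Z : seq V -> Prop) (w : oword V) : Prop :=
  exists f : nat -> nat, f 0 = 0 /\
    forall n, f n < f n.+1 /\ Z (segment w (f n) (f n.+1)).

Definition closed_nbhd (V : finType) (e : rel V) (v : V) : {set V} :=
  v |: [set v' | e v v'].

Definition L_v (V : finType) (e : rel V) (v : V) (w : oword V) : Prop :=
  omega_iter (starcat (fun _ => True) (fun y => y = [:: v; v])) w \/
  omega_iter (starcat (fun _ => True)
                (fun y => exists x, y = [:: x] /\ x \notin closed_nbhd e v)) w.

Definition L_G (V : finType) (e : rel V) (w : oword V) : Prop :=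
  forall v, L_v e v w.

(* Generalised Büchi automaton with input alphabet V: state set Q, finite output
   colour set C (output alphabet {set C} = 2^C), initial state, transition
   relation Delta, labelling col (only relevant on transitions in Delta). *)
Record gba (V : finType) := GBA {
  gba_Q : finType;
  gba_C : finType;
  gba_init : gba_Q;
  gba_delta : gba_Q -> V -> gba_Q -> bool;
  gba_col : gba_Q -> V -> gba_Q -> {set gba_C}
}.
Arguments gba_init {V} g.
Arguments gba_delta {V} g _ _ _.
Arguments gba_col {V} g _ _ _.

Definition gba_deterministic (V : finType) (A : gba V) : Prop :=
  forall p a q q', gba_delta A p a q -> gba_delta A p a q' -> q = q'.

Definition gba_complete (V : finType) (A : gba V) : Prop :=
  forall p a, exists q, gba_delta A p a q.

Definition gba_run (V : finType) (A : gba V) (w : oword V) (r : nat -> gba_Q A) :=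
  r 0 = gba_init A /\ forall i, gba_delta A (r i) (w i) (r i.+1).

Arguments gba_run {V} A w r.

Definition gba_accepting_run (V : finType) (A : gba V) (w : oword V)
    (r : nat -> gba_Q A) : Prop :=
  gba_run A w r /\
  forall c : gba_C A, forall N, exists i, N <= i /\ c \in gba_col A (r i) (w i) (r i.+1).

Arguments gba_accepting_run {V} A w r.

Definition gba_accepts (V : finType) (A : gba V) (w : oword V) : Prop :=
  exists r, gba_accepting_run A w r.

(* Main.v *)
Require Import Defs.
From mathcomp Require Import all_boot.
From mathcomp Require Import zify.
From Stdlib Require Import Classical ClassicalEpsilon.

Lemma segment_split (V : Type) (w : oword V) a c b : a <= c -> c <= b ->
  segment w a b = segment w a c ++ segment w c b.
Proof.
move=> hac hcb; rewrite /segment -map_cat.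
have -> : b - a = (c - a) + (b - c) by lia.
by rewrite iotaD; congr (map _ (_ ++ iota _ _)); lia.
Qed.

Lemma size_segment (V : Type) (w : oword V) a b : size (segment w a b) = b - a.
Proof. by rewrite /segment size_map size_iota. Qed.

Lemma starcat_tail (V : eqType) (w : oword V) (Y : seq V -> Prop) m a b :
  (forall y, Y y -> size y = m) -> 0 < m ->
  starcat (fun _ => True) Y (segment w a b) <-> (a + m <= b /\ Y (segment w (b - m) b)).
Proof.
move=> hY hm; split.
- move=> [xs [y [_ [Yy E]]]].
  have hs := f_equal size E; rewrite size_segment size_cat (hY _ Yy) in hs.
  have hle : a + m <= b by lia.
  split=> //.
  rewrite (@segment_split _ w a (b - m) b) in E; [|lia|lia].
  have: (segment w a (b - m) ++ segment w (b - m) b == xs ++ y) by rewrite E.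
  rewrite eqseq_cat; last by rewrite size_segment; lia.
  by case/andP=> _ /eqP ->.
- move=> [hle Yy]; exists (segment w a (b - m)), (segment w (b - m) b); split=> //.
  split=> //; apply: segment_split; lia.
Qed.

Lemma omega_inf (V : eqType) (w : oword V) (Y : seq V -> Prop) m :
  (forall y, Y y -> size y = m) -> 0 < m ->
  omega_iter (starcat (fun _ => True) Y) w <->
  (forall N, exists i, N <= i /\ Y (segment w i (i + m))).
Proof.
move=> hY hm; split.
- move=> [f [f0 hf]].
  have fge : forall n, n <= f n.
    elim=> [|n IH]; first by [].
    by case: (hf n) => h _; lia.
  move=> N; case: (hf (N + m)) => hlt /(@starcat_tail _ w Y m _ _ hY hm) [hle Yy].
  exists (f (N + m).+1 - m); split.
    have := fge (N + m); lia.
  by have -> : f (N + m).+1 - m + m = f (N + m).+1 by lia.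
- move=> H.
  have [g hg] : exists g : nat -> nat, forall N, N <= g N /\ Y (segment w (g N) (g N + m)).
    exists (fun N => proj1_sig (constructive_indefinite_description _ (H N))).
    by move=> N; case: constructive_indefinite_description.
  exists (fun n => iter n (fun x => g x + m) 0); split=> // n.
  rewrite iterS; set x := iter n _ _.
  case: (hg x) => h1 h2; split; first lia.
  apply/(@starcat_tail _ w Y m _ _ hY hm); split; first lia.
  by rewrite addnK.
Qed.

Lemma inf_vv (V : finType) (w : oword V) (v : V) :
  omega_iter (starcat (fun _ => True) (fun y => y = [:: v; v])) w <->
  (forall N, exists i, N <= i /\ w i = v /\ w i.+1 = v).
Proof.
rewrite (@omega_inf _ w _ 2) //; last by move=> y ->.
split=> H N; case: (H N) => i [hi Hi]; exists i; split=> //.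
- by move: Hi; rewrite /segment addKn /= => -[-> ->].
- by rewrite /segment addKn /=; case: Hi => -> ->.
Qed.

Lemma inf_out (V : finType) (w : oword V) (S : {set V}) :
  omega_iter (starcat (fun _ => True)
                (fun y => exists x, y = [:: x] /\ x \notin S)) w <->
  (forall N, exists i, N <= i /\ w i \notin S).
Proof.
rewrite (@omega_inf _ w _ 1) //; last by move=> y [x [-> _]].
split=> H N; case: (H N) => i [hi Hi]; exists i; split=> //.
- by move: Hi; rewrite /segment addKn /= => -[x [[->] ?]].
- by rewrite /segment addKn /=; exists (w i).
Qed.

Theorem lemma34 (V : finType) (e : rel V) (k : nat) :
  simple_graph e -> 0 < k -> colourable e k ->
  exists A : gba V,
    #|gba_Q A| = k /\ gba_deterministic A /\ gba_complete A /\
    forall w : oword V, gba_accepts A w <-> L_G e w.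
Proof.
move=> _ hk [c hc].
pose i0 : 'I_k := Ordinal hk.
exists (@GBA V 'I_k V i0 (fun p a q => q == c a)
  (fun p a q => [set v | ((p == c v) && (a == v)) || (a \notin closed_nbhd e v)])).
split; first by rewrite card_ord.
split; first by move=> p a q q' /= /eqP -> /eqP ->.
split; first by move=> p a; exists (c a) => /=.
move=> w; split.
- move=> [r [[r0 hr] hacc]] v.
  have hr' : forall j, r j.+1 = c (w j) by move=> j; apply/eqP; exact: hr.
  have hv := hacc v; simpl in hv.
  rewrite /L_v inf_vv inf_out.
  case: (classic (forall N, exists i, N <= i /\ w i \notin closed_nbhd e v)) => H; [right=>//|left].
  have [N0 HN0] : exists N0, forall i, N0 <= i -> w i \in closed_nbhd e v.
    apply: NNPP => H'; apply: H => N; apply: NNPP => H2; apply: H'.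
    exists N => i Hi; case E: (w i \in closed_nbhd e v) => //.
    by exfalso; apply: H2; exists i; rewrite E.
  move=> N; case: (hv (maxn N N0).+1) => i [hi]; rewrite inE.
  rewrite HN0; last by lia.
  rewrite orbF => /andP [/eqP hri /eqP hwi].
  case: i hi hri hwi => [//|j] hj hri hwi.
  rewrite hr' in hri.
  have : w j \in closed_nbhd e v by apply: HN0; lia.
  rewrite /closed_nbhd !inE => /orP [/eqP hwj|hej].
    by exists j; split=> //; lia.
  by exfalso; apply: (hc _ _ hej).
- move=> HL.
  exists (fun i => if i is j.+1 then c (w j) else i0).
  split; first by split=> // i /=.
  move=> v N /=; case: (HL v); rewrite ?inf_vv ?inf_out => H.
    case: (H N) => i [hi [h1 h2]]; exists i.+1; split; first lia.
    by rewrite inE h1 h2 !eqxx.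
  case: (H N) => i [hi h]; exists i; split=> //.
  by rewrite inE h orbT.
Qed.
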